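(* Let $k$ be a positive integer and $G_1,\dots,G_m$ finite subgraphs of $\mathsf{Path}_{\mathbb Z}$ with $G_1\cup\dots\cup G_m=\mathsf{Path}_k$, and let $g:=\mathrm{gap}(G_1,\dots,G_m)$. Then there exists a shift permutation $\sigma$ of $[m]$ such that \[\vec\lambda(G_{\sigma(1)},\dots,G_{\sigma(m)})\ge\frac{g-\max\{\lambda(G_1),\dots,\lambda(G_m)\}}{2}.\]
   Context: Graphs are finite simple graphs without isolated vertices; $\emptyset$ is the empty graph. $\mathsf{Path}_{\mathbb Z}$ has vertex set $\mathbb Z$ and edges $\{i-1,i\}$; for integers $s<t$, $\mathsf{Path}_{s,t}$ has vertices $s,\dots,t$ and edges $\{i-1,i\}$, $s<i\le t$; $\mathsf{Path}_k=\mathsf{Path}_{0,k}$. $\Delta(G)$ = number of connected components; $\lambda(G)$ = maximum number of edges in a component ($0$ for $\emptyset$); $G\ominus F$ = union of components of $G$ sharing no vertex with $F$. $\vec\Delta(H_1,\dots,H_r)=\sum_l\Delta(H_l\ominus(H_1\cup\dots\cup H_{l-1}))$, $\vec\lambda(H_1,\dots,H_r)=\sum_l\lambda(H_l\ominus(H_1\cup\dots\cup H_{l-1}))$. A shift permutation is a permutation $\sigma$ of $[m]$ with $\sigma(j)\ge j-1$ for all $j$. Gap: let $c=\vec\Delta(G_1,\dots,G_m)$ and $0\le s_1<t_1<\dots<s_c<t_c\le k$ the integers with $\bigcup_{j=1}^m\big(G_j\ominus(G_1\cup\dots\cup G_{j-1})\big)=\bigcup_{i=1}^c\mathsf{Path}_{s_i,t_i}$;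 $\mathrm{gap}(G_1,\dots,G_m):=\max_{y\in[0,k]}\min_{i}\big|\frac{s_i+t_i}{2}-y\big|$. *)

(* Defs.v *)
From HB Require Import structures.
From mathcomp Require Import all_boot all_order all_algebra all_fingroup.
From mathcomp Require Import finmap.
From mathcomp Require Import boolp classical_sets reals.
Set Implicit Arguments. Unset Strict Implicit. Unset Printing Implicit Defensive.
Import Order.TTheory GRing.Theory Num.Theory.
Local Open Scope fset_scope.
Local Open Scope ring_scope.

(* A finite subgraph of Path_Z without isolated vertices is determined by its
   edge set; the edge {i-1,i} is encoded by the integer i. *)
Definition pgraph := {fset int}.

Definition verts (G : pgraph) : {fset int} := G `|` [fset i - 1 | i in G].

Definition irange (s t : int) : seq int :=
  [seq s + (n%:Z) | n <- iota 1 `|t - s|%N].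

Definition path_st (s t : int) : pgraph := [fset i | i in irange s t].
Definition path_k (k : nat) : pgraph := path_st 0 k%:Z.

(* (s,t) is a connected component of G: G restricted to it is Path_{s,t}
   and it is maximal. *)
Definition is_comp (G : pgraph) (s t : int) : bool :=
  [&& s < t, all (fun i => i \in G) (irange s t), s \notin G & t + 1 \notin G].

Definition comps (G : pgraph) : {fset int * int} :=
  [fset p | p in [seq (x, y) | x <- verts G, y <- verts G] & is_comp G p.1 p.2].

Definition Delta (G : pgraph) : nat := #|` comps G|.

Definition lambda (G : pgraph) : nat :=
  \max_(p <- comps G) `|p.2 - p.1|%N.

(* G ⊖ F: union of components of G sharing no vertex with F *)
Definition ominus (G F : pgraph) : pgraph :=
  [fset i in G | all (fun p : int * int =>
      ~~ ((p.1 < i <= p.2) &&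
          has (fun v => p.1 <= v <= p.2) (verts F))) (comps G)].

(* The sequence of pieces H_l ⊖ (H_1 ∪ ... ∪ H_{l-1}) *)
Fixpoint pieces_aux (prev : pgraph) (H : seq pgraph) : seq pgraph :=
  match H with
  | [::] => [::]
  | h :: H' => ominus h prev :: pieces_aux (prev `|` h) H'
  end.
Definition pieces (H : seq pgraph) : seq pgraph := pieces_aux fset0 H.

Definition vecDelta (H : seq pgraph) : nat := \sum_(P <- pieces H) Delta P.
Definition vecLambda (H : seq pgraph) : nat := \sum_(P <- pieces H) lambda P.

Definition pieces_union (H : seq pgraph) : pgraph :=
  \big[fsetU/fset0]_(P <- pieces H) P.

Definition shift_perm (m : nat) (sigma : 'S_m) : Prop :=
  forall j : 'I_m, (j <= (sigma j).+1)%N.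

Definition gap (R : realType) (k : nat) (H : seq pgraph) : R :=
  let U := pieces_union H in
  let d (y : R) : R :=
    inf [set `|((p.1%:~R + p.2%:~R) / 2 : R) - y| | p in [set p | p \in comps U]] in
  sup [set d y | y in [set y : R | 0 <= y <= k%:R]].

(* Main.v *)
Require Import Defs.
From HB Require Import structures.
From mathcomp Require Import all_boot all_order all_algebra all_fingroup.
From mathcomp Require Import finmap.
From mathcomp Require Import boolp classical_sets reals.
From mathcomp Require Import zify lra.
Import Order.TTheory GRing.Theory Num.Theory.
Local Open Scope fset_scope.
Local Open Scope ring_scope.
Set Implicit Arguments. Unset Strict Implicit. Unset Printing Implicit Defensive.

Lemma in_verts (F : pgraph) v : (v \in verts F) = (v \in F) || (v + 1 \in F).
Proof.
rewrite /verts in_fsetU; congr orb; apply/imfsetP/idP => [[x Hx ->]|H].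
  by rewrite subrK.
by exists (v + 1) => //; rewrite addrK.
Qed.

Lemma irangeP s t x : s <= t -> (x \in irange s t) = (s < x <= t).
Proof.
move=> st; apply/mapP/idP => [[n]|H].
  rewrite mem_iota => /andP[h1 h2] ->. apply/andP; split; lia.
exists `|x - s|%N; first by rewrite mem_iota; apply/andP; split; lia.
lia.
Qed.

Lemma is_compP (G : pgraph) s e : reflect
  ([/\ s < e, (forall x, s < x <= e -> x \in G), s \notin G & e + 1 \notin G])
  (is_comp G s e).
Proof.
rewrite /is_comp; apply: (iffP and4P).
  case=> h1 /allP h2 h3 h4; split => // x hx; apply: h2; rewrite irangeP //; exact: ltW.
case=> h1 h2 h3 h4; split => //.
by apply/allP => x; rewrite irangeP; [apply: h2 | exact: ltW].
Qed.

Lemma in_comps (G : pgraph) s e : ((s, e) \in comps G) = is_comp G s e.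
Proof.
rewrite /comps inE /=.
apply/andP/idP => [[_ ->]//|H]; split => //.
case/is_compP: H => h1 h2 h3 h4.
apply/allpairsP; exists (s, e) => /=; split => //.
- rewrite /verts in_fsetU; apply/orP; right; apply/imfsetP; exists (s + 1).
    by apply: h2; apply/andP; split; lia.
  by rewrite addrK.
- by rewrite /verts in_fsetU h2 //; apply/andP; split; lia.
Qed.

Definition gbound (G : pgraph) : nat := \max_(y <- G) `|y|%N.

Lemma gbound_ge (G : pgraph) x : x \in G -> (`|x| <= gbound G)%N.
Proof. by move=> h; apply: (@leq_bigmax_seq _ _ xpredT (fun y => `|y|%N)). Qed.

Lemma ext_left (G : pgraph) i : i \in G ->
  exists s, [/\ s < i, s \notin G & forall x, s < x <= i -> x \in G].
Proof.
move=> Hi.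
suff: forall n : nat, forall i, i \in G -> i + (gbound G)%:Z <= n%:Z ->
  exists s, [/\ s < i, s \notin G & forall x, s < x <= i -> x \in G].
  by move=> H; apply: (H (absz (i + (gbound G)%:Z)) i Hi); lia.
elim=> [|n IH] j Hj Hb.
  case H1: (j - 1 \in G).
    have := gbound_ge H1; have := gbound_ge Hj; lia.
  exists (j - 1); split; [lia | by rewrite H1 |].
  by move=> x hx; have -> : x = j by lia.
case H1: (j - 1 \in G); last first.
  exists (j - 1); split; [lia | by rewrite H1 |].
  by move=> x hx; have -> : x = j by lia.
have [|s [h1 h2 h3]] := IH (j - 1) H1; first lia.
exists s; split => //; first lia.
move=> x hx; case: (boolP (x == j)) => [/eqP -> //|hne].
apply: h3; lia.
Qed.

Lemma ext_right (G : pgraph) i : i \in G ->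
  exists e, [/\ i <= e, e + 1 \notin G & forall x, i <= x <= e -> x \in G].
Proof.
move=> Hi.
suff: forall n : nat, forall i, i \in G -> (gbound G)%:Z - i <= n%:Z ->
  exists e, [/\ i <= e, e + 1 \notin G & forall x, i <= x <= e -> x \in G].
  by move=> H; apply: (H (absz ((gbound G)%:Z - i)) i Hi); lia.
elim=> [|n IH] j Hj Hb.
  case H1: (j + 1 \in G).
    have := gbound_ge H1; have := gbound_ge Hj; lia.
  exists j; split; [lia | by rewrite H1 |].
  by move=> x hx; have -> : x = j by lia.
case H1: (j + 1 \in G); last first.
  exists j; split; [lia | by rewrite H1 |].
  by move=> x hx; have -> : x = j by lia.
have [|e [h1 h2 h3]] := IH (j + 1) H1; first lia.
exists e; split => //; first lia.
move=> x hx; case: (boolP (x == j)) => [/eqP -> //|hne].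
apply: h3; lia.
Qed.

Lemma comp_exists (G : pgraph) i : i \in G ->
  exists s e, is_comp G s e /\ s < i <= e.
Proof.
move=> Hi; have [s [h1 h2 h3]] := ext_left Hi.
have [e [h4 h5 h6]] := ext_right Hi.
exists s, e; split; last by apply/andP.
apply/is_compP; split => //; first lia.
move=> x hx; case: (lerP x i) => hxi.
  by apply: h3; lia.
by apply: h6; lia.
Qed.

Lemma comp_uniq (G : pgraph) s e s' e' i : is_comp G s e -> is_comp G s' e' ->
  s < i <= e -> s' < i <= e' -> s = s' /\ e = e'.
Proof.
move=> /is_compP[a1 a2 a3 a4] /is_compP[b1 b2 b3 b4] h h'.
have ss : s = s'.
  case: (ltgtP s s') => // H.
  - by have := b3; rewrite a2 //; lia.
  - by have := a3; rewrite b2 //; lia.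
split => //.
case: (ltgtP e e') => // H.
- by have := a4; rewrite b2 //; lia.
- by have := b4; rewrite a2 //; lia.
Qed.

Definition touch (F : pgraph) (s e : int) : bool := has (fun v => s <= v <= e) (verts F).

Lemma touchP F s e : reflect (exists v, [/\ v \in verts F, s <= v & v <= e]) (touch F s e).
Proof.
apply: (iffP hasP) => [[v h1 /andP[h2 h3]]|[v [h1 h2 h3]]]; exists v => //.
by rewrite h2.
Qed.

Lemma in_ominus (G F : pgraph) i : (i \in ominus G F) =
  (i \in G) && all (fun p : int * int => ~~ ((p.1 < i <= p.2) && touch F p.1 p.2)) (comps G).
Proof. by rewrite /ominus inE. Qed.

Lemma ominus_sub (G F : pgraph) i : i \in ominus G F -> i \in G.
Proof. by rewrite in_ominus => /andP[]. Qed.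

Lemma ominus_killed (G F : pgraph) i p1 p2 : is_comp G p1 p2 -> p1 < i <= p2 ->
  touch F p1 p2 -> i \notin ominus G F.
Proof.
move=> hc hi ht; rewrite in_ominus negb_and; apply/orP; right.
apply/allPn; exists (p1, p2); first by rewrite in_comps.
by rewrite /= hi ht.
Qed.

Lemma ominus_comp (G F : pgraph) s e : is_comp G s e -> ~~ touch F s e ->
  is_comp (ominus G F) s e.
Proof.
move=> hc nt; have /is_compP[h1 h2 h3 h4] := hc.
apply/is_compP; split => //.
- move=> x hx; rewrite in_ominus h2 //=; apply/allP => [[p1 p2]].
  rewrite in_comps /= => hc'; apply/negP => /andP[hx' ht].
  have [e1 e2] := comp_uniq hc hc' hx hx'; subst p1 p2.
  by rewrite ht in nt.
- by apply: contra h3; apply: ominus_sub.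
- by apply: contra h4; apply: ominus_sub.
Qed.

Lemma lambda_ge (H : pgraph) s e : is_comp H s e -> e - s <= (lambda H)%:Z.
Proof.
move=> hc; have /is_compP[h1 _ _ _] := hc.
have : (`|e - s| <= lambda H)%N.
  rewrite /lambda.
  apply: (@leq_bigmax_seq _ _ xpredT (fun p : int * int => `|p.2 - p.1|%N) (s, e)) => //.
  by rewrite in_comps.
lia.
Qed.

Lemma in_bigU (T : Type) (r : seq T) (F : T -> pgraph) x :
  (x \in \big[fsetU/fset0]_(j <- r) F j) = has (fun j => x \in F j) r.
Proof.
elim: r => [|a r IH]; first by rewrite big_nil inE.
by rewrite big_cons in_fsetU IH.
Qed.

Definition PP (G : nat -> pgraph) n : pgraph := \big[fsetU/fset0]_(0 <= j < n) G j.

Lemma in_PP G n x : (x \in PP G n) = has (fun j => x \in G j) (iota 0 n).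
Proof. by rewrite /PP in_bigU /index_iota subn0. Qed.

Lemma in_PPP G n x : reflect (exists2 j, (j < n)%N & x \in G j) (x \in PP G n).
Proof.
rewrite in_PP; apply: (iffP hasP) => [[j h1 h2]|[j h1 h2]]; exists j => //.
  by move: h1; rewrite mem_iota; lia.
by rewrite mem_iota; lia.
Qed.

Lemma touch_PP G n s e : reflect (exists2 j, (j < n)%N & touch (G j) s e) (touch (PP G n) s e).
Proof.
apply: (iffP (touchP _ _ _)) => [[v [h1 h2 h3]]|[j hj /touchP [v [h1 h2 h3]]]].
  move: h1; rewrite in_verts => /orP[] /in_PPP [j hj hv]; exists j => //;
  apply/touchP; exists v; split => //; rewrite in_verts hv ?orbT //.
exists v; split => //; move: h1; rewrite !in_verts => /orP[] hv; apply/orP; [left|right];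
  apply/in_PPP; exists j => //.
Qed.

Lemma PP_S G n : PP G n.+1 = PP G n `|` G n.
Proof. by rewrite /PP big_nat_recr. Qed.

Lemma PP0 G : PP G 0 = fset0.
Proof. by rewrite /PP big_geq. Qed.

Lemma pieces_aux_cat prev s1 s2 :
  pieces_aux prev (s1 ++ s2) = pieces_aux prev s1 ++ pieces_aux (foldl fsetU prev s1) s2.
Proof. by elim: s1 prev => [|a s1 IH] prev //=; rewrite IH. Qed.

Lemma in_foldl x (prev : pgraph) s :
  (x \in foldl fsetU prev s) = (x \in prev) || has (fun h : pgraph => x \in h) s.
Proof.
by elim: s prev => [|a s IH] prev /=; rewrite ?orbF // IH in_fsetU orbA.
Qed.

Lemma pieces_id G n c : pieces_aux (PP G n) (map G (iota n c)) =
  map (fun t => ominus (G t) (PP G t)) (iota n c).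
Proof.
by elim: c n => [|c IH] n //=; rewrite -PP_S IH.
Qed.

Inductive sa : nat -> nat -> seq nat -> Prop :=
| sa_nil n : sa n n [::]
| sa_cons n b e l : (n <= b)%N -> sa b.+1 e l -> sa n e (b :: iota n (b - n) ++ l).

Lemma sa_le n e l : sa n e l -> (n <= e)%N.
Proof. elim=> // n0 b e0 l0 h _ h2; lia. Qed.

Lemma sa_mem n e l : sa n e l -> forall x, (x \in l) = (n <= x < e)%N.
Proof.
elim=> [n0 x|n0 b e0 l0 h s IH x]; first by rewrite in_nil; lia.
have := sa_le s.
rewrite in_cons mem_cat mem_iota IH; lia.
Qed.

Lemma sa_uniq n e l : sa n e l -> uniq l.
Proof.
elim=> // n0 b e0 l0 h s IH.
rewrite /= mem_cat mem_iota (sa_mem s) cat_uniq iota_uniq IH /= andbT.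
apply/andP; split; first lia.
apply/hasPn => x; rewrite mem_iota (sa_mem s); lia.
Qed.

Lemma sa_size n e l : sa n e l -> size l = (e - n)%N.
Proof.
elim=> [n0|n0 b e0 l0 h s IH]; first by rewrite subnn.
have := sa_le s; rewrite /= size_cat size_iota IH; lia.
Qed.

Lemma sa_shift n e l : sa n e l -> forall j, (j < size l)%N -> (n + j <= (nth 0 l j).+1)%N.
Proof.
elim=> // n0 b e0 l0 h s IH [|j] /=; first by lia.
rewrite size_cat size_iota ltnS => hj.
rewrite nth_cat size_iota; case: ifP => hj2.
  rewrite nth_iota //; lia.
have := IH (j - (b - n0))%N; lia.
Qed.

Lemma sa_id n e : (n <= e)%N -> sa n e (iota n (e - n)).
Proof.
move=> h; have [d ->] : exists d, e = (n + d)%N by exists (e - n)%N; lia.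
rewrite addKn; elim: d n {h} => [|d IH] n; first by rewrite addn0; apply: sa_nil.
have := sa_cons (leqnn n) (IH n.+1).
by rewrite subnn /= addSnnS.
Qed.

Lemma sa_cat n p e l1 l2 : sa n p l1 -> sa p e l2 -> sa n e (l1 ++ l2).
Proof.
elim=> // n0 b e0 l0 h s IH s2.
rewrite cat_cons -catA; apply: sa_cons => //; exact: IH.
Qed.

Lemma sa_fold G n e l : sa n e l -> foldl fsetU (PP G n) (map G l) = PP G e.
Proof.
move=> s; apply/fsetP => x; rewrite in_foldl.
apply/orP/in_PPP => [[/in_PPP[j hj hx]|/hasP[h /mapP[j hj ->] hx]]|[j hj hx]].
- by exists j => //; have := sa_le s; lia.
- by exists j => //; move: hj; rewrite (sa_mem s); lia.
case: (ltnP j n) => hjn; first by left; apply/in_PPP; exists j.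
right; apply/hasP; exists (G j) => //; apply/mapP; exists j => //.
by rewrite (sa_mem s); lia.
Qed.

Definition VS G n l := \sum_(p <- pieces_aux (PP G n) (map G l)) lambda p.

Lemma VS_cat G n p e l1 l2 : sa n p l1 -> sa p e l2 -> VS G n (l1 ++ l2) = (VS G n l1 + VS G p l2)%N.
Proof.
move=> s1 s2; rewrite /VS map_cat pieces_aux_cat big_cat /= (sa_fold G s1) //.
Qed.

Lemma VS_block G n b : (n <= b)%N ->
  (lambda (ominus (G b) (PP G n)) <= VS G n (b :: iota n (b - n)))%N.
Proof. by move=> h; rewrite /VS /= big_cons leq_addr. Qed.

Definition UU G m : pgraph := \big[fsetU/fset0]_(t <- iota 0 m) ominus (G t) (PP G t).

Lemma in_UU G m x : reflect (exists2 t, (t < m)%N & x \in ominus (G t) (PP G t)) (x \in UU G m).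
Proof.
rewrite /UU in_bigU; apply: (iffP hasP) => [[j h1 h2]|[j h1 h2]]; exists j => //.
  by move: h1; rewrite mem_iota; lia.
by rewrite mem_iota; lia.
Qed.

Lemma PP_mono G t t' x : (t <= t')%N -> x \in PP G t -> x \in PP G t'.
Proof. move=> h /in_PPP [j hj hx]; apply/in_PPP; exists j => //; lia. Qed.

Lemma G_PP G t t' x : (t < t')%N -> x \in G t -> x \in PP G t'.
Proof. by move=> h hx; apply/in_PPP; exists t. Qed.

Lemma U_comp G m t s e : (t < m)%N -> is_comp (G t) s e -> ~~ touch (PP G t) s e ->
  is_comp (UU G m) s e.
Proof.
move=> htm hc nt; have /is_compP[h1 h2 h3 h4] := hc.
have hoc := ominus_comp hc nt; have /is_compP[_ o2 _ _] := hoc.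
apply/is_compP; split => //.
- by move=> x hx; apply/in_UU; exists t => //; apply: o2.
- apply/negP => /in_UU [t' ht' hs].
  have hs' := ominus_sub hs.
  case: (ltngtP t' t) => htt.
  + move/negP: nt; apply; apply/touchP; exists s; split => //; last lia.
    by rewrite in_verts (G_PP htt hs').
  + have [p1 [p2 [hc' hp]]] := comp_exists hs'.
    suff: ~~ (s \in ominus (G t') (PP G t')) by rewrite hs.
    apply: (ominus_killed hc' hp).
    apply/touchP; exists s; split => //; try lia.
    rewrite in_verts; apply/orP; right; apply: (G_PP htt); apply: h2; lia.
  + by subst t'; rewrite hs' in h3.
- apply/negP => /in_UU [t' ht' hs].
  have hs' := ominus_sub hs.
  case: (ltngtP t' t) => htt.
  + move/negP: nt; apply; apply/touchP; exists e; split => //; try lia.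
    by rewrite in_verts (G_PP htt hs') orbT.
  + have [p1 [p2 [hc' hp]]] := comp_exists hs'.
    suff: ~~ (e + 1 \in ominus (G t') (PP G t')) by rewrite hs.
    apply: (ominus_killed hc' hp).
    have /is_compP[q1 _ _ _] := hc'.
    apply/touchP; exists e; split => //; try lia.
    rewrite in_verts; apply/orP; left; apply: (G_PP htt); apply: h2; lia.
  + by subst t'; rewrite hs' in h4.
Qed.

Lemma comp_nonempty (H : pgraph) s e : is_comp H s e -> H != fset0.
Proof.
move=> /is_compP[h1 h2 _ _]; apply/negP => /eqP H0.
have : e \in H by apply: h2; lia. by rewrite H0 inE.
Qed.

Lemma VS_iota G n e : (VS G n (iota n (e - n)) >= 0)%N.
Proof. by []. Qed.

Lemma arith_chain (a' b' s e s2 e2 v s' e' : int) (x1 x2 x3 x4 lam : nat) :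
  b' - a' <= (x1 + x2)%N%:Z -> a' <= s' -> e' <= b' -> s2 <= v <= e2 -> (a' <= s2) && (e2 <= b') ->
  s <= v -> v <= e -> e - s <= lam%:Z -> (lam <= x3)%N ->
  exists a b : int, [/\ b - a <= ((x2 + x3) + (x1 + x4))%N%:Z, a <= s, e <= b, a <= a' & b' <= b].
Proof.
move=> h1 h2 h3 /andP[h4 h5] /andP[h6 h7] h8 h9 h10 h11.
case: (lerP a' s) => ha; case: (lerP b' e) => hb.
- by exists a', e; split; lia.
- by exists a', b'; split; lia.
- by exists s, e; split; lia.
- by exists s, b'; split; lia.
Qed.

Lemma chain G m (Hm : forall t, (m <= t)%N -> G t = fset0) t :
  forall s e, is_comp (G t) s e -> exists lU lN (a b s' e' : int),
  [/\ sa 0 t.+1 lU, sa 0 t lN, b - a <= ((VS G 0 lU + VS G 0 lN)%N)%:Z, (a <= s) && (e <= b)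
    & [/\ is_comp (UU G m) s' e', a <= s' & e' <= b]].
Proof.
elim/ltn_ind: t => t IH s e hc.
have htm : (t < m)%N.
  by case: (ltnP t m) => // h; have := comp_nonempty hc; rewrite Hm // eqxx.
have /is_compP[c1 c2 c3 c4] := hc.
case T: (touch (PP G t) s e); last first.
  have s1 : sa 0 t (iota 0 t) by have := sa_id (leq0n t); rewrite subn0.
  have s2 : sa t t.+1 [:: t] by have := sa_id (leqnSn t); rewrite subSnn.
  exists (iota 0 t ++ [:: t]), (iota 0 t), s, e, s, e; split.
  - exact: sa_cat s1 s2.
  - exact: s1.
  - rewrite (VS_cat _ s1 s2).
    have := VS_block G (leqnn t); rewrite subnn /= => hb.
    have := lambda_ge (ominus_comp hc (negbT T)); lia.
  - by rewrite !lexx.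
  - split => //; apply: (U_comp htm hc); by rewrite T.
have [j hj hjt] := @touch_PP G t s e T.
have exP : exists j, touch (G j) s e by exists j.
case: (ex_minnP exP) => t' ht' hmin.
have htt : (t' < t)%N by have := hmin j hjt; lia.
have nt : ~~ touch (PP G t') s e.
  apply/negP => /touch_PP [j' hj' ht2]; have := hmin j' ht2; lia.
have /touchP [v [hv1 hv2 hv3]] := ht'.
have [i [hi hvi]] : exists i, i \in G t' /\ (i = v \/ i = v + 1).
  move: hv1; rewrite in_verts => /orP[] h; [exists v | exists (v + 1)]; tauto.
have [s2 [e2 [hc2 hse2]]] := comp_exists hi.
have [lU' [lN' [a' [b' [s' [e' [u1 u2 u3 u4 [u6 u7 u8]]]]]]]] := IH t' htt s2 e2 hc2.
have sb : sa t' t.+1 (t :: iota t' (t - t')).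
  by have := sa_cons (ltnW htt) (sa_nil t.+1); rewrite cats0.
have sr : sa t'.+1 t (iota t'.+1 (t - t'.+1)) by apply: sa_id.
have hb := VS_block G (ltnW htt).
have hl := lambda_ge (ominus_comp hc nt).
have hv1' : s <= v := hv2.
have hw : s2 <= v <= e2 by move: hse2; case: hvi => ->; clear; lia.
have [a0 [b0 [k1 k2 k3 k4 k5]]] := arith_chain (VS G t'.+1 (iota t'.+1 (t - t'.+1))) u3 u7 u8 hw u4 hv1' hv3 hl hb.
exists (lN' ++ (t :: iota t' (t - t'))), (lU' ++ iota t'.+1 (t - t'.+1)), a0, b0, s', e'.
split.
- exact: sa_cat u2 sb.
- exact: sa_cat u1 sr.
- rewrite (VS_cat _ u2 sb) (VS_cat _ u1 sr); move: k1; clear; lia.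
- by rewrite k2 k3.
- split => //.
  + by move: k4 u7; clear; lia.
  + by move: k5 u8; clear; lia.
Qed.

Definition ext m (G : 'I_m -> pgraph) (n : nat) : pgraph :=
  if insub n is Some j then G j else fset0.

Lemma ext_val m (G : 'I_m -> pgraph) (j : 'I_m) : ext G (val j) = G j.
Proof. by rewrite /ext valK. Qed.

Lemma ext_out m (G : 'I_m -> pgraph) n : (m <= n)%N -> ext G n = fset0.
Proof. by move=> h; rewrite /ext insubF //; apply/negbTE; rewrite -leqNgt. Qed.

Lemma map_enum_ext m (G : 'I_m -> pgraph) (f : 'I_m -> 'I_m) :
  [seq G (f j) | j <- enum 'I_m] = map (ext G) [seq val (f j) | j <- enum 'I_m].
Proof. by rewrite -map_comp; apply: eq_map => j /=; rewrite ext_val. Qed.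

Lemma perm_of_sa m (l : seq nat) : sa 0 m l ->
  exists s : 'S_m, shift_perm s /\ [seq val (s j) | j <- enum 'I_m] = l.
Proof.
move=> hs; have hsz := sa_size hs; rewrite subn0 in hsz.
have hmem := sa_mem hs; have hu := sa_uniq hs.
have hlt : forall j : 'I_m, (nth 0 l j < m)%N.
  move=> j; have : nth 0 l j \in l by apply: mem_nth; rewrite hsz.
  by rewrite hmem; case/andP.
pose f (j : 'I_m) : 'I_m := insubd j (nth 0 l j).
have hf : forall j, val (f j) = nth 0 l j by move=> j; rewrite val_insubd hlt.
have finj : injective f.
  move=> j1 j2 /(congr1 val); rewrite !hf => /eqP.
  rewrite nth_uniq ?hsz // => /eqP h; exact: val_inj.
exists (perm finj); split.
  move=> j; rewrite permE hf.
  have := sa_shift hs (j := j); rewrite hsz => h; exact: h.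
transitivity [seq nth 0 l j | j <- iota 0 m].
  by rewrite -val_enum_ord -map_comp; apply: eq_map => j /=; rewrite permE hf.
by rewrite -hsz; apply: mkseq_nth.
Qed.

Lemma VS_ext G n e l : sa n e l -> forall m, (e <= m)%N ->
  exists l', sa n m l' /\ (VS G n l <= VS G n l')%N.
Proof.
move=> hs m hm; exists (l ++ iota e (m - e)); split.
  exact: sa_cat hs (sa_id hm).
by rewrite (VS_cat _ hs (sa_id hm)) leq_addr.
Qed.

Lemma vecLambda_VS G l : vecLambda (map G l) = VS G 0 l.
Proof. by rewrite /VS PP0. Qed.

Lemma pick_v (R : realType) (k : nat) (y : R) : (0 < k)%N -> 0 <= y <= k%:R ->
  exists v : nat, [/\ (1 <= v <= k)%N, v%:R - 1 <= y & y <= v%:R].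
Proof.
elim: k y => [|k IH] y //= _ /andP[h1 h2].
case: (lerP y 1) => hy.
  by exists 1%N; split; [lia | lra | lra].
have hk : (0 < k)%N.
  by case: k {IH} h2 hy => // h2 hy; move: h2; rewrite mulr1n; lra.
have [|v [hv1 hv2 hv3]] := IH (y - 1) hk.
  by apply/andP; split; move: h2; rewrite -natr1; lra.
by exists v.+1; split; [lia | rewrite -natr1; lra | rewrite -natr1; lra].
Qed.

Lemma real_bound (R : realType) (a b s e s' e' : int) (v : nat) (y : R) (V : nat) :
  b - a <= V%:Z -> a <= s -> e <= b -> a <= s' -> s' < e' -> e' <= b ->
  s < v%:Z -> v%:Z <= e -> v%:R - 1 <= y -> y <= v%:R ->
  `|((s'%:~R + e'%:~R) / 2 : R) - y| <= V%:R.
Proof.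
move=> h1 h2 h3 h4 h5 h6 h7 h8 h9 h10.
have hv : ((v%:Z)%:~R : R) = v%:R := erefl.
have hV : ((V%:Z)%:~R : R) = V%:R := erefl.
have g1 : (b%:~R - a%:~R : R) <= V%:R by rewrite -hV -intrB ler_int.
have g2 : (a%:~R : R) <= s%:~R by rewrite ler_int.
have g3 : (e%:~R : R) <= b%:~R by rewrite ler_int.
have g4 : (a%:~R : R) <= s'%:~R by rewrite ler_int.
have g5 : (s'%:~R : R) < e'%:~R by rewrite ltr_int.
have g6 : (e'%:~R : R) <= b%:~R by rewrite ler_int.
have g7 : (s%:~R : R) + 1 <= v%:R.
  by rewrite -hv -[1]/(1%:~R) -intrD ler_int; lia.
have g8 : (v%:R : R) <= e%:~R by rewrite -hv ler_int.
rewrite ler_norml; apply/andP; split; lra.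
Qed.

Unset Implicit Arguments.

Theorem lemma5p9 (R : realType) (k m : nat) (G : 'I_m -> pgraph) :
  (0 < k)%N ->
  \big[fsetU/fset0]_(j < m) G j = path_k k ->
  exists sigma : 'S_m, shift_perm sigma /\
    ((gap R k [seq G j | j <- enum 'I_m]
       - (\max_(j < m) lambda (G j))%:R) / 2
     <= (vecLambda [seq G (sigma j) | j <- enum 'I_m])%:R).
Proof.
move=> k0 hU.
pose G' := ext G.
have Hm : forall t, (m <= t)%N -> G' t = fset0 by move=> t; apply: ext_out.
pose Vs (s : 'S_m) := vecLambda [seq G (s j) | j <- enum 'I_m].
pose shiftb (s : 'S_m) := [forall j : 'I_m, (j <= (s j).+1)%N].
have sh1 : shiftb (1%g : 'S_m) by apply/forallP => j; rewrite perm1; lia.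
case: (arg_maxnP Vs sh1) => s0 hs0 hmax.
exists s0; split; first by move=> j; move/forallP: hs0 => /(_ j).
have hid : [seq G j | j <- enum 'I_m] = map G' (iota 0 m).
  by rewrite -val_enum_ord -map_comp; apply: eq_map => j /=; rewrite /G' ext_val.
have hUU : pieces_union [seq G j | j <- enum 'I_m] = UU G' m.
  rewrite hid /pieces_union /pieces; have := pieces_id G' 0 m; rewrite PP0 => ->.
  by rewrite big_map.
have hVs : forall l, sa 0 m l -> (VS G' 0 l <= Vs s0)%N.
  move=> l hl; have [s1 [hs1 hm1]] := perm_of_sa hl.
  have : (Vs s1 <= Vs s0)%N.
    by apply: hmax; apply/forallP => j; apply: hs1.
  by rewrite /Vs map_enum_ext hm1 vecLambda_VS.
rewrite /gap hUU /=.
set d := fun y : R => inf _.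
have key : forall y : R, 0 <= y <= k%:R -> d y <= 2 * (Vs s0)%:R.
  move=> y hy.
  have [v [hv1 hv2 hv3]] := pick_v k0 hy.
  have hvp : v%:Z \in path_k k.
    have : v%:Z \in irange 0 k%:Z by rewrite irangeP; lia.
    by rewrite /path_k /path_st inE.
  rewrite -hU in_bigU in hvp; case/hasP: hvp => j _ hvj.
  have hvG : v%:Z \in G' (val j) by rewrite /G' ext_val.
  have [s [e [hc hse]]] := comp_exists hvG.
  have [lU [lN [a [b [s' [e' [h1 h2 h3 h4 [h5 h6 h7]]]]]]]] := chain Hm hc.
  have [lU2 [hU2 hVU]] := VS_ext G' h1 (ltn_ord j).
  have [lN2 [hN2 hVN]] := VS_ext G' h2 (ltnW (ltn_ord j)).
  have q1 := hVs _ hU2; have q2 := hVs _ hN2.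
  pose f := fun p : int * int => `|((p.1%:~R + p.2%:~R) / 2 : R) - y|.
  have hE : (f @` [set p : int * int | p \in comps (UU G' m)])%classic (f (s', e')).
    by exists (s', e') => //=; rewrite /= in_comps.
  have hlb : has_lbound (f @` [set p : int * int | p \in comps (UU G' m)])%classic.
    by exists 0 => x [p _ <-]; apply: normr_ge0.
  apply: le_trans (ge_inf hlb hE) _.
  have /is_compP [c1 _ _ _] := h5.
  apply: le_trans (real_bound (a := a) (b := b) (s := s) (e := e) (V := (Vs s0 + Vs s0)%N) _ _ _ _ _ _ _ _ hv2 hv3) _.
  - move: h3 hVU hVN q1 q2; clear; lia.
  - by move: h4; clear; lia.
  - by move: h4; clear; lia.
  - exact: h6.
  - exact: c1.
  - exact: h7.
  - by move: hse; clear; lia.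
  - by move: hse; clear; lia.
  - by rewrite natrD mulr2n mulrDl mul1r.
have hsup : sup [set d y | y in [set y : R | 0 <= y <= k%:R]] <= 2 * (Vs s0)%:R.
  apply: ge_sup.
    by exists (d 0), 0 => //=; rewrite lexx ler0n.
  by move=> x [y hy <-]; apply: key.
have hM := ler0n R (\max_(j < m) lambda (G j)).
rewrite -/(Vs s0); lra.
Qed.
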